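(* Let $\mathcal{F}$ be an argumentation framework and $S\subseteq A_{\mathcal{F}}$. Suppose that whether or not $S$ is a $\mathit{cf2}$-extension of $\mathcal{F}$ is well-defined. Then $S\in\mathit{cf2}(\mathcal{F})$ if and only if $S\in\mathit{tfcf2}(\mathcal{F})$. Similarly, suppose that whether or not $S$ is a $\mathit{stg2}$-extension of $\mathcal{F}$ is well-defined. Then $S\in\mathit{stg2}(\mathcal{F})$ if and only if $S\in\mathit{tfstg2}(\mathcal{F})$.
   Context: An argumentation framework (AF) is a pair $\mathcal{F}=(A_{\mathcal{F}},R_{\mathcal{F}})$ with $R_{\mathcal{F}}\subseteq A_{\mathcal{F}}\times A_{\mathcal{F}}$ (possibly infinite); write $a\rightarrow b$ for $(a,b)\in R_{\mathcal{F}}$. For $S\subseteq A_{\mathcal{F}}$, $\mathcal{F}|_S=(A_{\mathcal{F}}\cap S,R_{\mathcal{F}}\cap(S\times S))$. $S$ is conflict-free if there are no $a,b\in S$ with $a\rightarrow b$; $cf(\mathcal{F})$ is the set of conflict-free sets. $S^+=\{x:\exists y\in S,\ y\rightarrow x\}$ and $S^\oplus=S\cup S^+$. $S$ is a naive extension if it is a $\subseteq$-maximal conflict-free set; $S$ is a stage extension if it is conflict-free and there is no conflict-free $T$ with $S^\oplus\subsetneq T^\oplus$. For $a\in A_{\mathcal{F}}$, $\mathrm{SCC}(a)$ (the strongly connected component of $a$) is the set of $b$ such that there are directed attack paths (possibly of length $0$) from $a$ to $b$ and from $b$ to $a$; $\mathrm{SCC}(\mathcal{F})$ is the set of these components. For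 $X,S\subseteq A_{\mathcal{F}}$, $D_S(X)=\{b\in X:\exists a\in S\setminus X,\ a\rightarrow b\}$. $\mathit{cf2}$: $S\in\mathit{cf2}(\mathcal{F})$ iff either $|\mathrm{SCC}(\mathcal{F})|=1$ and $S$ is naive in $\mathcal{F}$, or $|\mathrm{SCC}(\mathcal{F})|\neq 1$ and for each $X\in\mathrm{SCC}(\mathcal{F})$, $S\cap X\in\mathit{cf2}(\mathcal{F}|_{X\setminus D_S(X)})$ (the same definition applied recursively to the subframework, with attacks and components computed there). Unfolding this recursion gives a tree of recursive calls rooted at $(\mathcal{F},S)$; nodes whose framework has exactly one SCC (or is empty) are leaves. Whether $S$ is a $\mathit{cf2}$-extension is well-defined if this tree has no infinite branch; then $S\in\mathit{cf2}(\mathcal{F})$ iff at every leaf with exactly one SCC, the relevant part of $S$ is naive in that leaf's framework. $\mathit{stg2}$ is defined identically with ''stage'' in place of ''naive''. $\mathit{tfcf2}$, $\mathit{tfstg2}$: for $S\subseteq A_{\mathcal{F}}$, $a\in A_{\mathcal{F}}$ and ordinals $\alpha$ define $C^0_S(a)=\mathrm{SCC}(a)$; $C^{\alpha+1}_S(a)$ = the strongly connected component of $a$ in $\mathcal{F}|_{C^\alpha_S(a)\setminus D_S(C^\alpha_S(a))}$ (empty if $a$ is not in that set); for limit $\lambda$, $C^\lambda_S(a)$ = the strongly connected component of $a$ in $\mathcal{F}|_{\bigcap_{\alpha<\lambda}C^\alpha_S(a)}$. Let $\alpha_S(a)$ be the least $\alpha$ with $a\notin C^\alpha_S(a)$ or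 $C^{\alpha+1}_S(a)=C^\alpha_S(a)$. Then $S\in\mathit{tfcf2}(\mathcal{F})$ iff $S\in cf(\mathcal{F})$ and for each $a\in A_{\mathcal{F}}$, either $a\notin C^{\alpha_S(a)}_S(a)$ or $S\cap C^{\alpha_S(a)}_S(a)$ is a naive extension of $\mathcal{F}|_{C^{\alpha_S(a)}_S(a)}$; $\mathit{tfstg2}$ is the same with ''stage extension'' in place of ''naive extension''. *)

(* Defs.v *)
From Stdlib Require Import Relations.
From mathcomp Require Import all_boot.
From mathcomp Require Import boolp classical_sets.

Set Implicit Arguments.
Unset Strict Implicit.
Unset Printing Implicit Defensive.
Local Open Scope classical_set_scope.

Section AF.
Variable T : Type.

Record AF := mkAF { args : set T; att : T -> T -> Prop }.

Definition wf_AF (F : AF) : Prop :=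
  forall x y, att F x y -> args F x /\ args F y.

Definition restrict (F : AF) (S : set T) : AF :=
  mkAF (args F `&` S) (fun x y => att F x y /\ S x /\ S y).

Definition conflict_free (F : AF) (S : set T) : Prop :=
  S `<=` args F /\ forall a b, S a -> S b -> ~ att F a b.

Definition splus (F : AF) (S : set T) : set T :=
  [set x | exists y, S y /\ att F y x].

Definition srange (F : AF) (S : set T) : set T := S `|` splus F S.

Definition naive (F : AF) (S : set T) : Prop :=
  conflict_free F S /\
  forall U, conflict_free F U -> S `<=` U -> U = S.

Definition stage (F : AF) (S : set T) : Prop :=
  conflict_free F S /\
  ~ (exists U, conflict_free F U /\
       srange F S `<=` srange F U /\ srange F S <> srange F U).

Definition reach (F : AF) : T -> T -> Prop := clos_refl_trans T (att F).

Definition scc (F : AF) (a : T) : set T :=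
  [set b | args F a /\ reach F a b /\ reach F b a].

Definition sccs (F : AF) : set (set T) :=
  [set X | exists a, args F a /\ X = scc F a].

Definition one_scc (F : AF) : Prop := exists X, sccs F = [set X].

Definition Dset (F : AF) (S X : set T) : set T :=
  [set b | X b /\ exists a, S a /\ ~ X a /\ att F a b].

(** Nodes of the tree of recursive calls: (framework, relevant part of S). *)
Definition node := (AF * set T)%type.

Definition child (n m : node) : Prop :=
  ~ one_scc n.1 /\
  exists X, sccs n.1 X /\
    m = (restrict n.1 (X `\` Dset n.1 n.2 X), n.2 `&` X).

Inductive reachable (r : node) : node -> Prop :=
| reach_refl : reachable r r
| reach_step : forall n m, reachable r n -> child n m -> reachable r m.

(** Whether S ∈ cf2(F) (resp. stg2) is well-defined: the tree of recursive
    calls rooted at (F, S) has no infinite branch. *)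
Definition rec_well_defined (F : AF) (S : set T) : Prop :=
  ~ (exists f : nat -> node, f 0 = (F, S) /\ forall k, child (f k) (f k.+1)).

(** S ∈ sem2(F): at every node of the recursion tree the relevant part of S
    is a set of arguments of that node's framework (extensions are subsets of
    the arguments), and at every leaf with exactly one SCC it is a
    [sem]-extension of the leaf's framework. *)
Definition rec2 (sem : AF -> set T -> Prop) (F : AF) (S : set T) : Prop :=
  forall G S', reachable (F, S) (G, S') ->
    S' `<=` args G /\ (one_scc G -> sem G S').

Definition cf2 := rec2 naive.
Definition stg2 := rec2 stage.

(** Ordinal indices are represented by (initial segments of) arbitrary
    well-orders: a type I with a well-founded strict total order. *)
Definition well_order (I : Type) (lt : I -> I -> Prop) : Prop :=
  well_founded lt /\
  (forall x y z, lt x y -> lt y z -> lt x z) /\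
  (forall x y, lt x y \/ x = y \/ lt y x).

Definition is_pred (I : Type) (lt : I -> I -> Prop) (j i : I) : Prop :=
  lt j i /\ forall k, lt k i -> k = j \/ lt k j.

Definition is_limit (I : Type) (lt : I -> I -> Prop) (i : I) : Prop :=
  (exists j, lt j i) /\ ~ (exists j, is_pred lt j i).

Definition tf_step (F : AF) (S : set T) (a : T) (X : set T) : set T :=
  scc (restrict F (X `\` Dset F S X)) a.

(** C : I -> set T is the sequence (C^α_S(a))_α along the well-order (I, lt). *)
Definition tf_seq (F : AF) (S : set T) (a : T)
    (I : Type) (lt : I -> I -> Prop) (C : I -> set T) : Prop :=
  (forall i, (forall j, ~ lt j i) -> C i = scc F a) /\
  (forall i j, is_pred lt j i -> C i = tf_step F S a (C j)) /\
  (forall i, is_limit lt i ->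
     C i = scc (restrict F [set x | forall j, lt j i -> C j x]) a).

Definition tf_stop (F : AF) (S : set T) (a : T) (X : set T) : Prop :=
  ~ X a \/ tf_step F S a X = X.

Definition tf2 (sem : AF -> set T -> Prop) (F : AF) (S : set T) : Prop :=
  conflict_free F S /\
  forall a, args F a ->
    exists (I : Type) (lt : I -> I -> Prop) (C : I -> set T) (i : I),
      well_order lt /\ tf_seq F S a lt C /\
      tf_stop F S a (C i) /\ (forall j, lt j i -> ~ tf_stop F S a (C j)) /\
      (~ C i a \/ sem (restrict F (C i)) (S `&` C i)).

Definition tfcf2 := tf2 naive.
Definition tfstg2 := tf2 stage.

End AF.

(* Main.v *)
Require Import Defs.
From Stdlib Require Import Relations.
From mathcomp Require Import all_boot.
From mathcomp Require Import boolp classical_sets.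
From mathcomp Require Import zify.
Local Open Scope classical_set_scope.
Set Implicit Arguments.
Unset Strict Implicit.

Lemma wf_min (I : Type) (lt : I -> I -> Prop) (P : I -> Prop) :
  well_founded lt -> forall x, P x -> exists y, P y /\ forall z, lt z y -> ~ P z.
Proof.
move=> wfl x Px.
case: (pselect (exists y, P y /\ forall z, lt z y -> ~ P z)) => // H.
exfalso.
have : forall y, ~ P y.
  apply: (well_founded_ind wfl (fun y => ~ P y)) => y IH Py.
  by apply: H; exists y; split.
by move=> /(_ x).
Qed.

Lemma wf_ltn : well_founded (fun x y : nat => (x < y)%N).
Proof.
move=> n; elim: n {-2}n (leqnn n) => [|n IH] m lm; constructor => k lk.
  by move: (leq_trans lk lm).
by apply: IH; rewrite -ltnS; exact: leq_trans lk lm.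
Qed.

Lemma wo_nat : well_order (fun x y : nat => (x < y)%N).
Proof.
split; first exact: wf_ltn.
split; first by move=> x y z h1 h2; exact: ltn_trans h1 h2.
by move=> x y; case: (ltngtP x y) => h; by [left | right; right | right; left].
Qed.

Lemma restrictA T (G : AF T) A B : restrict (restrict G A) B = restrict G (A `&` B).
Proof.
rewrite /restrict /=; congr mkAF; first by rewrite setIA.
apply: funext => x; apply: funext => y; apply: propext; split.
  by move=> [[h [ax ay]] [bx bY]].
by move=> [h [[ax bx] [ay bY]]].
Qed.

Lemma restrict_self T (G : AF T) : wf_AF G -> restrict G (args G) = G.
Proof.
case: G => A R wfG; rewrite /restrict /=; congr mkAF; first by rewrite setIid.
apply: funext => x; apply: funext => y; apply: propext; split; first by case.
by move=> h; split => //; exact: wfG h.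
Qed.

Lemma wf_restrict T (G : AF T) W : wf_AF G -> wf_AF (restrict G W).
Proof. by move=> wf x y [/wf [? ?] [? ?]]. Qed.

Lemma scc_args T (G : AF T) a : wf_AF G -> scc G a `<=` args G.
Proof.
move=> wf b [Ha [Hab _]].
have : forall x y, clos_refl_trans T (att G) x y -> args G x -> args G y.
  move=> x y; elim => //.
  - by move=> x0 y0 /wf [].
  - by move=> x0 y0 z0 _ IH1 _ IH2 /IH1 /IH2.
by move=> /(_ _ _ Hab Ha).
Qed.

Lemma scc_args_of T (G : AF T) a b : scc G a b -> args G a.
Proof. by case. Qed.

Lemma scc_refl T (G : AF T) a : args G a -> scc G a a.
Proof. by move=> h; split => //; split; apply: rt_refl. Qed.

Lemma scc_same T (G : AF T) a b : wf_AF G -> scc G a b -> scc G b = scc G a.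
Proof.
move=> wf H; have Hb := scc_args wf H; move: H => [Ha [Hab Hba]].
apply/seteqP; split => c [_ [H1 H2]].
  by split => //; split; [exact: rt_trans Hab H1 | exact: rt_trans H2 Hba].
by split => //; split; [exact: rt_trans Hba H1 | exact: rt_trans H2 Hab].
Qed.

Lemma one_scc_of T (G : AF T) a : wf_AF G -> args G a -> args G `<=` scc G a -> one_scc G.
Proof.
move=> wf Ha Hs; exists (scc G a); apply/seteqP; split => X.
  by move=> [d [Hd ->]]; rewrite /set1 /=; apply: scc_same => //; exact: Hs.
by move=> ->; exists a.
Qed.

Lemma one_scc_inv T (G : AF T) : wf_AF G -> one_scc G ->
  exists a, args G a /\ args G `<=` scc G a.
Proof.
move=> wf [X HX].
have : sccs G X by rewrite HX.
case=> a [Ha EX]; exists a; split => // d Hd.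
have : sccs G (scc G d) by exists d.
rewrite HX => /= E.
by rewrite -EX -E; exact: scc_refl.
Qed.

Section Main.
Variables (T : Type) (F : AF T) (S : set T).
Hypothesis wf : wf_AF F.
Hypothesis HS : S `<=` args F.

Definition Yd (Z : set T) := Z `\` Dset F S Z.
Definition Nd (Z : set T) : node T := (restrict F (Yd Z), S `&` Z).
Definition Zq a k := iter k (tf_step F S a) (args F).

Lemma D_root : Dset F S (args F) = set0.
Proof.
apply/seteqP; split => b //.
by move=> [_ [a [Sa [nA _]]]]; exact: nA (HS Sa).
Qed.

Lemma Y_root : Yd (args F) = args F.
Proof. by rewrite /Yd D_root setD0. Qed.

Lemma root_eq : Nd (args F) = (F, S).
Proof. by rewrite /Nd Y_root restrict_self // setIidl. Qed.

Lemma Y_sub X : Yd X `<=` X.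
Proof. by move=> x []. Qed.

Lemma tf_step_sub a X : tf_step F S a X `<=` Yd X.
Proof. by move=> x /(scc_args (@wf_restrict _ _ (Yd X) wf)) []. Qed.

Lemma Zq_args a k : Zq a k `<=` args F.
Proof.
elim: k => [|k IH] //= x /tf_step_sub /Y_sub; exact: IH.
Qed.

Lemma Zq_S a k : Zq a k.+1 `<=` Zq a k.
Proof. by move=> x /tf_step_sub /Y_sub. Qed.

Lemma Zq_mono a j k : (j <= k)%N -> Zq a k `<=` Zq a j.
Proof.
move=> le; rewrite -(subnK le); elim: (k - j)%N => [|d IH]; first by rewrite add0n => x.
rewrite addSn; exact: subset_trans (@Zq_S _ _) IH.
Qed.

Lemma Zq1 a : Zq a 1 = scc F a.
Proof. by rewrite /Zq /= /tf_step D_root setD0 restrict_self. Qed.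

Lemma Dset_restrict Z X : S `&` Z `<=` Yd Z -> X `<=` Yd Z ->
  Dset (restrict F (Yd Z)) (S `&` Z) X = Dset F S X.
Proof.
move=> HSZ HX; apply/seteqP; split => b.
  by move=> [Xb [d [[Sd Zd] [nXd [Hatt _]]]]]; split => //; exists d.
move=> [Xb [d [Sd [nXd Hatt]]]]; split => //; exists d.
have Zd : Z d.
  case: (pselect (Z d)) => // nZd; exfalso.
  have [Zb nDb] := HX b Xb.
  by apply: nDb; split => //; exists d.
split; first by split.
split => //; split => //; split; [exact: HSZ | exact: HX].
Qed.

Lemma child_eq Z X : S `&` Z `<=` Yd Z -> X `<=` Yd Z ->
  (restrict (Nd Z).1 (X `\` Dset (Nd Z).1 (Nd Z).2 X), (Nd Z).2 `&` X) = Nd X.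
Proof.
move=> HSZ HX; rewrite /= Dset_restrict // restrictA /Nd /Yd.
congr pair.
  congr (restrict F _); apply: setIidr => x [Xx _]; exact: HX.
apply/seteqP; split => x; first by move=> [[Sx _] Xx].
by move=> [Sx Xx]; split => //; split => //; exact: Y_sub (HX _ Xx).
Qed.

Lemma sccs_sub Z X : sccs (restrict F (Yd Z)) X -> X `<=` Yd Z.
Proof. by move=> [b [Hb ->]] x /(scc_args (@wf_restrict _ _ (Yd Z) wf)) []. Qed.

Lemma leaf Z a : Z `<=` args F -> S `&` Z `<=` Yd Z -> Yd Z a ->
  one_scc (restrict F (Yd Z)) ->
  tf_step F S a Z = Yd Z /\ tf_stop F S a (tf_step F S a Z).
Proof.
move=> Zargs HSZ Ya Hone.
have wfG := @wf_restrict _ _ (Yd Z) wf.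
have aG : args (restrict F (Yd Z)) a by split => //; exact: Zargs (Y_sub Ya).
have [a' [Ha' Hs]] := one_scc_inv wfG Hone.
have Hs' : args (restrict F (Yd Z)) `<=` scc (restrict F (Yd Z)) a.
  by rewrite (scc_same wfG (Hs a aG)).
have E : tf_step F S a Z = Yd Z.
  apply/seteqP; split; first exact: tf_step_sub.
  move=> x Yx; apply: Hs'; split => //; exact: Zargs (Y_sub Yx).
split => //; right; rewrite E.
have YY : Yd (Yd Z) = Yd Z.
  apply/seteqP; split; first exact: Y_sub.
  move=> b Yb; split => //; move=> [_ [d [Sd [nYd Hatt]]]].
  case: (pselect (Z d)) => Zd.
    by apply: nYd; apply: HSZ.
  by apply: Yb.2; split; [exact: Yb.1 | exists d].
change (scc (restrict F (Yd (Yd Z))) a = Yd Z).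
by rewrite YY; exact: E.
Qed.

Lemma path_step Z a :
  (forall n, reachable (F, S) n -> n.2 `<=` args n.1) ->
  Z `<=` args F -> reachable (F, S) (Nd Z) -> Yd Z a ->
  ~ one_scc (restrict F (Yd Z)) ->
  child (Nd Z) (Nd (tf_step F S a Z)) /\ reachable (F, S) (Nd (tf_step F S a Z)).
Proof.
move=> Hsub Zargs R Ya nos.
have HSZ : S `&` Z `<=` Yd Z by move=> x Hx; exact: (Hsub _ R x Hx).2.
have Hc : child (Nd Z) (Nd (tf_step F S a Z)).
  split => //; exists (tf_step F S a Z); split.
    by exists a; split => //; split => //; exact: Zargs (Y_sub Ya).
  by symmetry; apply: child_eq => //; exact: tf_step_sub.
by split => //; exact: reach_step R Hc.
Qed.

Lemma core a (I : Type) (lt : I -> I -> Prop) (C : I -> set T) (i : I) :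
  well_order lt -> tf_seq F S a lt C -> tf_stop F S a (C i) ->
  (forall j, lt j i -> ~ tf_stop F S a (C j)) ->
  forall p, (forall q, (q < p)%N -> ~ tf_stop F S a (Zq a q.+1)) ->
  tf_stop F S a (Zq a p.+1) -> C i = Zq a p.+1.
Proof.
move=> [wfl [tr tot]] [C0 [Cs Cl]] Si Ni.
have claim : forall p, (forall q, (q < p)%N -> ~ tf_stop F S a (Zq a q.+1)) ->
    exists j, (j = i \/ lt j i) /\ C j = Zq a p.+1.
  elim => [|p IH] H.
    have [b [_ Hb]] := wf_min (P := fun _ => True) wfl (x := i) Logic.I.
    exists b; split.
      by case: (tot b i) => [h|[h|h]]; [right|left|exfalso; exact: Hb _ h Logic.I].
    by rewrite C0 ?Zq1 // => j /Hb; apply.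
  have [j [ji Cj]] := IH (fun q lq => H q (leqW lq)).
  have nstop : ~ tf_stop F S a (C j) by rewrite Cj; apply: H.
  have lji : lt j i by case: ji => // E; rewrite E in nstop.
  have [s [ljs Hs]] := wf_min (P := lt j) wfl lji.
  exists s; split.
    by case: (tot s i) => [h|[h|h]]; [right|left|exfalso; exact: Hs _ h lji].
  rewrite (Cs s j) ?Cj //; split => // k lks.
  by case: (tot k j) => [h|[h|h]]; [right|left|exfalso; exact: Hs _ lks h].
move=> p H Sp; have [j [ji Cj]] := claim p H.
case: ji => [<-//|lji]; exfalso; apply: (Ni j lji); by rewrite Cj.
Qed.

Definition inv (n : node T) := exists Z, n = Nd Z /\ Z `<=` args F /\
  forall c, Yd Z c -> exists k, Z = Zq c k /\
    forall j, (j.+1 < k)%N -> ~ tf_stop F S c (Zq c j.+1).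

Lemma inv_reach (HSZ : forall Z, S `&` Z `<=` Yd Z) n :
  reachable (F, S) n -> inv n.
Proof.
elim => [|n0 m _ [Z [-> [Zargs HZ]]] [nos [X [HX ->]]]].
  exists (args F); split; first by rewrite root_eq.
  by split => // c _; exists 0%N; split.
have XY := sccs_sub HX.
rewrite child_eq //; exists X; split => //; split.
  exact: subset_trans XY (subset_trans (@Y_sub Z) Zargs).
move=> c Yc.
have Xc := Y_sub Yc.
have Yzc := XY c Xc.
have [k [Ek Nk]] := HZ c Yzc.
have wfG := @wf_restrict _ _ (Yd Z) wf.
have EX : X = tf_step F S c Z.
  move: HX => [b [Hb EX]]; rewrite EX /=.
  by symmetry; apply: scc_same => //; rewrite -EX.
exists k.+1; split; first by rewrite EX Ek.
move=> j ltj.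
have [lt1|ge1] := ltnP j.+1 k; first exact: Nk.
have kj : k = j.+1 by lia.
rewrite -kj -Ek => -[nZc|E].
  by apply: nZc; exact: Y_sub Yzc.
apply: nos; apply: (@one_scc_of _ _ c) => //.
  by split => //; exact: Zargs (Y_sub Yzc).
move=> d [_ Yd'].
change (tf_step F S c Z d); rewrite E; exact: Y_sub Yd'.
Qed.

Variable sem : AF T -> set T -> Prop.

Lemma tf_cf2 : tf2 sem F S -> rec2 sem F S.
Proof.
move=> [cf Htf] G S' R.
have HSZ : forall Z, S `&` Z `<=` Yd Z.
  move=> Z x [Sx Zx]; split => // -[_ [d [Sd [_ Hatt]]]].
  exact: cf.2 d x Sd Sx Hatt.
have [Z [E [Zargs HZ]]] := inv_reach HSZ R.
move: E => [-> ->].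
split.
  by move=> x Hx; split; [exact: HS (Hx.1) | exact: HSZ Hx].
move=> Hone.
have wfG := @wf_restrict _ _ (Yd Z) wf.
have [a0 [Ha0 Hsub0]] := one_scc_inv wfG Hone.
have Ya := Ha0.2.
have [E1 St] := leaf Zargs (HSZ Z) Ya Hone.
have [k [Ek Nk]] := HZ a0 Ya.
have Zk1 : Zq a0 k.+1 = tf_step F S a0 Z by rewrite Ek.
have [p [Np [Sp Ep]]] : exists p, (forall q, (q < p)%N -> ~ tf_stop F S a0 (Zq a0 q.+1)) /\
    tf_stop F S a0 (Zq a0 p.+1) /\ Zq a0 p.+1 = Yd Z.
  case: k Ek Nk Zk1 => [|k] Ek Nk Zk1.
    by exists 0%N; split => //; rewrite Zk1.
  case: (pselect (tf_stop F S a0 (Zq a0 k.+1))) => Sk.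
    exists k; split; first by move=> q lq; apply: Nk; lia.
    split => //.
    rewrite -Ek in Sk *; case: Sk => [nZ|EZ].
      by exfalso; apply: nZ; exact: Y_sub Ya.
    by rewrite -{1}EZ E1.
  exists k.+1; split.
    move=> q lq; case: (ltnP q k) => h; first by apply: Nk; lia.
    by have -> : q = k by lia.
  by rewrite Zk1.
have [I [lt [C [i [wo [ts [Si [Ni Hc]]]]]]]] := Htf a0 (Zargs _ (Y_sub Ya)).
have Ci := core wo ts Si Ni Np Sp.
rewrite Ep in Ci.
case: Hc => [nCa|Hsem].
  by exfalso; apply: nCa; rewrite Ci.
rewrite Ci in Hsem.
have -> : S `&` Z = S `&` Yd Z.
  apply/seteqP; split => x [Sx Hx]; split => //; [exact: HSZ | exact: Y_sub].
exact: Hsem.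
Qed.

Lemma cf2_tf : (forall G S', sem G S' -> conflict_free G S') ->
  rec_well_defined F S -> rec2 sem F S -> tf2 sem F S.
Proof.
move=> Hcf Hwd Hrec.
have Hsub : forall n, reachable (F, S) n -> n.2 `<=` args n.1.
  by move=> [G S'] R; exact: (Hrec G S' R).1.
have Hsem : forall Z, reachable (F, S) (Nd Z) -> one_scc (restrict F (Yd Z)) ->
    sem (restrict F (Yd Z)) (S `&` Z).
  by move=> Z R; exact: (Hrec _ _ R).2.
have HSZ : forall Z, reachable (F, S) (Nd Z) -> S `&` Z `<=` Yd Z.
  by move=> Z R x Hx; exact: (Hsub _ R x Hx).2.
have R0 : reachable (F, S) (Nd (args F)) by rewrite root_eq; exact: reach_refl.
split.
  split => // a b Sa Sb Hab.
  have nosH : forall Z, reachable (F, S) (Nd Z) -> Yd Z a -> Yd Z b ->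
      ~ one_scc (restrict F (Yd Z)).
    move=> Z R Ya Yb Hone.
    have [_ Hc] := Hcf _ _ (Hsem _ R Hone).
    by apply: (Hc a b); [split => //; exact: Y_sub Ya | split => //; exact: Y_sub Yb | ].
  have claim : forall k, reachable (F, S) (Nd (Zq b k)) /\ Yd (Zq b k) a /\ Yd (Zq b k) b.
    elim => [|k [R [Ya Yb]]].
      by rewrite /= Y_root; split => //; split; exact: HS.
    have [_ R'] := path_step Hsub (@Zq_args b k) R Yb (nosH _ R Ya Yb).
    have HSX := HSZ _ R'.
    have Xb : tf_step F S b (Zq b k) b.
      by apply: scc_refl; split => //; exact: HS.
    have Xa : tf_step F S b (Zq b k) a.
      case: (pselect (tf_step F S b (Zq b k) a)) => // nXa; exfalso.
      have [_ nD] : Yd (tf_step F S b (Zq b k)) b by apply: HSX.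
      by apply: nD; split => //; exists a.
    by split => //; split; apply: HSX; split.
  apply: Hwd; exists (fun k => Nd (Zq b k)); split; first exact: root_eq.
  move=> k; have [R [Ya Yb]] := claim k.
  exact: (path_step Hsub (@Zq_args b k) R Yb (nosH _ R Ya Yb)).1.
move=> a Fa.
have branch : forall m, (forall q, (q < m)%N -> ~ tf_stop F S a (Zq a q.+1)) ->
    Zq a m.+1 a -> forall k, (k <= m)%N -> reachable (F, S) (Nd (Zq a k)).
  move=> m Nm Am; elim => [_|k IH lk]; first exact: R0.
  have R := IH (ltnW lk).
  have Ak : Zq a k.+1 a := @Zq_mono a k.+1 m.+1 (leqW lk) a Am.
  have [_ Ya] := scc_args_of (Ak : scc (restrict F (Yd (Zq a k))) a a).
  have nos : ~ one_scc (restrict F (Yd (Zq a k))).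
    move=> Hone; have [_ St] := leaf (@Zq_args a k) (HSZ _ R) Ya Hone.
    exact: Nm k lk St.
  exact: (path_step Hsub (@Zq_args a k) R Ya nos).2.
have Hex : exists m, tf_stop F S a (Zq a m.+1).
  case: (pselect (exists m, tf_stop F S a (Zq a m.+1))) => // Hno; exfalso.
  have Nall : forall q, ~ tf_stop F S a (Zq a q.+1) by move=> q Sq; apply: Hno; exists q.
  have Aall : forall q, Zq a q.+1 a.
    move=> q; case: (pselect (Zq a q.+1 a)) => // nA; exfalso.
    by apply: (Nall q); left.
  have Rall : forall k, reachable (F, S) (Nd (Zq a k)) :=
    fun k => branch k (fun q _ => Nall q) (Aall k) k (leqnn k).
  apply: Hwd; exists (fun k => Nd (Zq a k)); split; first exact: root_eq.
  move=> k.
  have [_ Ya] := scc_args_of (Aall k : scc (restrict F (Yd (Zq a k))) a a).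
  have nos : ~ one_scc (restrict F (Yd (Zq a k))).
    move=> Hone; have [_ St] := leaf (@Zq_args a k) (HSZ _ (Rall k)) Ya Hone.
    exact: Nall k St.
  exact: (path_step Hsub (@Zq_args a k) (Rall k) Ya nos).1.
have [m [Sm Mm]] : exists m, tf_stop F S a (Zq a m.+1) /\
    forall q, (q < m)%N -> ~ tf_stop F S a (Zq a q.+1).
  case: Hex => m0 S0.
  have [m [Sm Hm]] := wf_min (P := fun m => tf_stop F S a (Zq a m.+1)) wf_ltn S0.
  by exists m; split => // q lq; exact: Hm q lq.
exists nat, (fun x y => (x < y)%N), (fun k => Zq a k.+1), m.
split; first exact: wo_nat.
split.
  split.
    move=> i; case: i => [_|i Hi]; first exact: Zq1.
    by exfalso; exact: Hi i (ltnSn i).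
  split.
    move=> i j [lji Hp]; case: i lji Hp => [//|i] lji Hp.
    have -> : j = i.
      case: (Hp i (ltnSn i)) => // lij; lia.
    by [].
  move=> i [[j lji] np]; exfalso; apply: np.
  case: i lji => [//|i] _; exists i; split => // k lk.
  rewrite ltnS leq_eqVlt in lk; case/orP: lk => [/eqP->|h]; [left|right] => //.
split => //; split => //.
case: (pselect (Zq a m.+1 a)) => Am; last by left.
right.
have Rm := branch m Mm Am m (leqnn m).
have [_ Ya] := scc_args_of (Am : scc (restrict F (Yd (Zq a m))) a a).
case: (pselect (one_scc (restrict F (Yd (Zq a m))))) => Hone.
  have [E1 _] := leaf (@Zq_args a m) (HSZ _ Rm) Ya Hone.
  change (Zq a m.+1) with (tf_step F S a (Zq a m)); rewrite E1.
  have -> : S `&` Yd (Zq a m) = S `&` Zq a m.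
    apply/seteqP; split => x [Sx Hx]; split => //; [exact: Y_sub | exact: HSZ].
  exact: Hsem _ Rm Hone.
have [_ R'] := path_step Hsub (@Zq_args a m) Rm Ya Hone.
set X := tf_step F S a (Zq a m) in R'.
have SmX : tf_stop F S a X := Sm.
change (sem (restrict F X) (S `&` X)).
case: SmX => [//|EX].
have YX : Yd X = X.
  apply/seteqP; split; first exact: Y_sub.
  by move=> x Xx; rewrite -EX in Xx; exact: tf_step_sub Xx.
have Hone' : one_scc (restrict F (Yd X)).
  apply: (@one_scc_of _ _ a); first exact: wf_restrict.
    by split => //; rewrite YX.
  by move=> d [_ Yd']; rewrite YX -EX in Yd'; exact: Yd'.
by have := Hsem _ R' Hone'; rewrite YX.
Qed.

End Main.

Theorem theorem1 (T : Type) (F : AF T) (S : set T) :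
  wf_AF F -> S `<=` args F ->
  (rec_well_defined F S -> (cf2 F S <-> tfcf2 F S)) /\
  (rec_well_defined F S -> (stg2 F S <-> tfstg2 F S)).
Proof.
move=> wf HS; split => Hwd; split.
- by apply: (cf2_tf wf HS) => // G S' [].
- exact: (tf_cf2 wf HS).
- by apply: (cf2_tf wf HS) => // G S' [].
- exact: (tf_cf2 wf HS).
Qed.
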